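(* Let $X$ be a $T_0$ space, $U$ an $SI_2$-open subset of $X$, $x\in X$, and let $\mathcal F$ be a family of sets of the form $\uparrow F$ with $F$ a nonempty finite subset of $X$, such that $\mathcal F$ is an irreducible subset of $P_S(X)$. If $\bigcap\mathcal F\subseteq\uparrow x\subseteq U$, then $F\subseteq U$ for some $\uparrow F\in\mathcal F$.
   Context: For a $T_0$ space $X$, the specialization order is $x\le y$ iff $x\in \mathrm{cl}\{y\}$; $\uparrow A=\{x: a\le x\text{ for some } a\in A\}$, $\uparrow x=\uparrow\{x\}$. $A^\uparrow$ and $A^\downarrow$ are the sets of upper and lower bounds of $A$, and $A^\delta=(A^\uparrow)^\downarrow$. A nonempty $A\subseteq X$ is irreducible if whenever $A\subseteq F_1\cup F_2$ with $F_1,F_2$ closed, $A\subseteq F_1$ or $A\subseteq F_2$. $P_S(X)$ is the set of nonempty compact saturated (upper) subsets of $X$ with the upper Vietoris topology, having basis $\{\square V: V \text{ open}\}$, $\square V=\{Q: Q\subseteq V\}$ (for finite $F$, $\uparrow F$ is such a set). A subset $U\subseteq X$ is $SI_2$-open if $U$ is open and for every irreducible $F\subseteq X$, $F^\delta\cap U\neq\emptyset$ implies $F\cap U\ne\emptyset$. *)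

(* Defs.v *)
From HB Require Import structures.
From mathcomp Require Import all_boot all_order all_algebra.
From mathcomp Require Import all_classical all_reals all_analysis.
Set Implicit Arguments. Unset Strict Implicit. Unset Printing Implicit Defensive.
Local Open Scope classical_set_scope.

Section Defs.
Context {X : topologicalType}.

Definition spec (x y : X) : Prop := closure [set y] x.

Definition up (A : set X) : set X := [set x | exists2 a, A a & spec a x].

(* saturated = upper set w.r.t. specialization order *)
Definition upper_set (A : set X) : Prop := forall x y, A x -> spec x y -> A y.

Definition upper_bounds (A : set X) : set X := [set u | forall a, A a -> spec a u].
Definition lower_bounds (A : set X) : set X := [set l | forall a, A a -> spec l a].
Definition delta (A : set X) : set X := lower_bounds (upper_bounds A).

Definition irreducible (A : set X) : Prop :=
  A !=set0 /\ forall F1 F2 : set X, closed F1 -> closed F2 ->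
    A `<=` F1 `|` F2 -> A `<=` F1 \/ A `<=` F2.

Definition SI2_open (U : set X) : Prop :=
  open U /\ forall F : set X, irreducible F ->
    delta F `&` U !=set0 -> F `&` U !=set0.

Definition PS : set (set X) := [set Q | Q !=set0 /\ compact Q /\ upper_set Q].

(* basic open sets of the upper Vietoris topology *)
Definition box (V : set X) : set (set X) := [set Q | PS Q /\ Q `<=` V].

Definition uV_open (W : set (set X)) : Prop :=
  W `<=` PS /\ forall Q, W Q -> exists V : set X, [/\ open V, Q `<=` V & box V `<=` W].

Definition uV_closed (C : set (set X)) : Prop := C `<=` PS /\ uV_open (PS `\` C).

Definition PS_irreducible (A : set (set X)) : Prop :=
  A `<=` PS /\ A !=set0 /\ forall C1 C2 : set (set X), uV_closed C1 -> uV_closed C2 ->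
    A `<=` C1 `|` C2 -> A `<=` C1 \/ A `<=` C2.

End Defs.

(* Main.v *)
Require Import Defs.
From mathcomp Require Import all_boot all_order all_algebra.
From mathcomp Require Import all_classical all_reals all_analysis.
Local Open Scope classical_set_scope.

Section Helpers.
Context {X : topologicalType}.

Lemma spec_refl (a : X) : spec a a.
Proof. exact: subset_closure. Qed.

Lemma open_up (V : set X) a y : open V -> V a -> spec a y -> V y.
Proof.
move=> oV Va sp; have /sp [z [-> Vz]] : nbhs a V by apply: open_nbhs_nbhs.
done.
Qed.

Lemma closed_down (C : set X) a y : closed C -> C y -> spec a y -> C a.
Proof.
move=> cC Cy sp; apply: cC; apply: (closureS _ sp) => z ->; done.
Qed.

Lemma spec_trans (a b c : X) : spec a b -> spec b c -> spec a c.
Proof.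
move=> ab bc; exact: (closed_down _ _ _ (@closed_closure _ [set c]) bc ab).
Qed.

End Helpers.

Theorem proposition2p9 (X : topologicalType) (hT0 : kolmogorov_space X)
  (U : set X) (x : X) (calF : set (set X)) :
  SI2_open U ->
  (forall A, calF A -> exists F : set X, [/\ finite_set F, F !=set0 & A = up F]) ->
  PS_irreducible calF ->
  \bigcap_(A in calF) A `<=` up [set x] ->
  up [set x] `<=` U ->
  exists F : set X, [/\ finite_set F, F !=set0, calF (up F) & F `<=` U].
Proof.
move=> [oU SI] hF [FPS [Fne Firr]] Hcap HxU.
apply: contrapT => Hno.
have HnU : forall A, calF A -> ~ A `<=` U.
  move=> A /[dup] FA /hF [G [fG G0 AG]] AU; apply: Hno; exists G; split => //.
  - by rewrite -AG.
  - by move=> g Gg; apply: AU; rewrite AG; exists g => //; exact: spec_refl.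
pose P (W : set X) := open W /\ forall A, calF A -> ~ A `<=` W `|` U.
have [W0 [[oW0 PW0] W0max]] : exists A, P A /\ forall B, A `<` B -> ~ P B.
  apply: Zorn_bigcup => Ch ChP Chtot; split.
    by apply: bigcup_open => i /ChP [].
  move=> A FA AU.
  have [G [fG G0 AG]] := hF A FA.
  have [s Gs] := (finite_seqP G).1 fG.
  have Gin : forall g, g \in s -> exists2 W, Ch W & W g \/ U g.
    move=> g gs.
    have : (\bigcup_(X0 in Ch) X0 `|` U) g.
      by apply: AU; rewrite AG; exists g; [rewrite Gs|exact: spec_refl].
    case=> [[W ChW Wg]|Ug].
      by exists W => //; left.
    case: (pselect (exists W, Ch W)) => [[W ChW]|nW].
      by exists W => //; right.
    exfalso; apply: (HnU A FA) => y Ay.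
    have [[W ChW _]|//] := AU y Ay.
    by exfalso; apply: nW; exists W.
  case: (pselect (exists W, Ch W)) => [[W1 ChW1]|nW]; last first.
    apply: (HnU A FA) => y Ay.
    have [[W ChW _]|//] := AU y Ay.
    by exfalso; apply: nW; exists W.
  have [W [ChW HW]] : exists W, Ch W /\ forall g, g \in s -> W g \/ U g.
    elim: s Gin {Gs} => [|a s IH] Gin.
      by exists W1; split => // g; rewrite in_nil.
    have [W' ChW' HW'] := Gin a (mem_head a s).
    have [W'' [ChW'' HW'']] := IH (fun g gs => Gin g (@mem_behead _ (a :: s) g gs)).
    have [sub|sub] := Chtot _ _ ChW' ChW''.
      exists W''; split => // g; rewrite in_cons => /orP [/eqP ->|/HW''] //.
      by case: HW' => [/sub|]; [left|right].
    exists W'; split => // g; rewrite in_cons => /orP [/eqP ->|/HW''] //.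
    by case=> [/sub|]; [left|right].
  have [_ PW] := ChP W ChW.
  apply: (PW A FA); rewrite AG => y [g Gg sp].
  apply: (open_up _ _ _ (openU (ChP W ChW).1 oU) _ sp).
  by apply: HW; move: Gg; rewrite Gs.
pose C := ~` (W0 `|` U).
have cC : closed C by apply: open_closedC; apply: openU.
have meets : forall A, calF A -> A `&` C !=set0.
  move=> A FA; apply: contrapT => nm; apply: (PW0 A FA) => y Ay.
  apply: contrapT => ny; apply: nm; by exists y.
have minC : forall D, closed D -> D `<=` C -> (forall A, calF A -> A `&` D !=set0) -> C `<=` D.
  move=> D cD DC mD.
  have PD : P (~` D).
    split; first exact: closed_openC.
    move=> A FA AD; have [y [Ay Dy]] := mD A FA.
    case: (AD y Ay) => //.
    by move=> Uy; have := DC y Dy; apply; right.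
  have sub : W0 `<=` ~` D by move=> y W0y Dy; apply: (DC y Dy); left.
  have eq : W0 = ~` D.
    apply: contrapT => neq; apply: (W0max (~` D)) => //; split => //.
    by move=> sub'; apply: neq; apply/seteqP; split.
  move=> c Cc; apply: contrapT => nD.
  by apply: Cc; left; rewrite eq.
have Cirr : irreducible C.
  split.
    have [A FA] := Fne; have [y [_ Cy]] := meets A FA; by exists y.
  move=> F1 F2 cF1 cF2 CF.
  pose Ci (Fi : set X) := [set Q : set X | PS Q /\ Q `&` (C `&` Fi) !=set0].
  have uVC : forall Fi, closed Fi -> uV_closed (Ci Fi).
    move=> Fi cFi; split; first by move=> Q [].
    split; first by move=> Q [].
    move=> Q [PQ nCQ]; exists (~` (C `&` Fi)); split.
    - by apply: closed_openC; apply: closedI.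
    - by move=> y Qy Cy; apply: nCQ; split => //; exists y.
    - by move=> Q' [PQ' Q'V]; split => // [[_ [y [Q'y Cy]]]]; exact: (Q'V y Q'y).
  have cov : calF `<=` Ci F1 `|` Ci F2.
    move=> A FA; have [y [Ay Cy]] := meets A FA.
    by case: (CF y Cy) => Fy; [left|right]; split; try exact: FPS; exists y.
  have H : forall Fi, closed Fi -> calF `<=` Ci Fi -> C `<=` Fi.
    move=> Fi cFi sub y Cy.
    have : C `<=` C `&` Fi.
      apply: minC; first exact: closedI.
        by move=> z [].
      by move=> A FA; have [_ [z [Az [Cz Fz]]]] := sub A FA; exists z.
    by move=> /(_ y Cy) [].
  by case: (Firr _ _ (uVC F1 cF1) (uVC F2 cF2) cov) => sub; [left|right]; apply: H.
have xU : U x by apply: HxU; exists x => //; exact: spec_refl.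
have [y [Cy Uy]] : C `&` U !=set0.
  apply: (SI C Cirr); exists x; split => // u ub.
  have : up [set x] u.
    apply: Hcap => A FA.
    have [c [Ac Cc]] := meets A FA.
    have [G [_ _ AG]] := hF A FA.
    move: Ac; rewrite AG => -[g Gg sp]; exists g; first exact: Gg.
    exact: (spec_trans _ _ _ sp (ub c Cc)).
  by case=> z zx sp'; rewrite zx in sp'; exact: sp'.
by apply: Cy; right.
Qed.
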